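(* Let $\alpha,\beta\in\mathbb N^N$ with $\alpha_j\le\beta_j$ for all $j$, and let $S:\beta/\alpha\to\mathbb N$ be a row strict tableau. Let $I\subseteq[N]$ be the set of rows of $S$ containing a $0$, and let $T$ be the row strict tableau of shape $\beta/(\alpha+\varepsilon_I)$ with entries in $\mathbb Z_+$ obtained by deleting all zeros from $S$. Then \[ h_{w_0}(T)=h_{w_0}(S)-h_I(\alpha). \]
   Context: Row shapes: for $\alpha,\beta\in\mathbb Z^N$ with $\alpha_j\le\beta_j$, row $j$ of $\beta/\alpha$ consists of boxes with $x$-coordinates $\alpha_j+1,\dots,\beta_j$; boxes at $x$-coordinates $\alpha_j$ and $\beta_j+1$ are said to be adjacent to the left and right ends of row $j$. A $w_0$-triple is $(u,v,w)$ with $v$ a box in row $r$, $u,w$ each a box of or adjacent to a row $j>r$, with $x$-coordinates $i_u=i_v$, $i_w=i_v+1$. A row strict tableau $S:\beta/\alpha\to\mathcal A$ ($\mathcal A$ totally ordered) is strictly increasing along rows. A $w_0$-triple is increasing in $S$ if $S(u)<S(v)<S(w)$, with the conventions $S(u)=-\infty$ if $u$ is adjacent to the left end of a row and $S(w)=+\infty$ if $w$ is adjacent to the right end; $h_{w_0}(S)$ is the number of increasing $w_0$-triples. $\varepsilon_I=\sum_{i\in I}\varepsilon_i$, and $h_I(\alpha)=|\{(r,s):1\le r<s\le N,\ r\in I,\ s\notin I,\ \alpha_s=\alpha_r+1\}|$. *)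

(* Defs.v *)
From mathcomp Require Import all_boot all_order all_algebra.
Set Implicit Arguments. Unset Strict Implicit. Unset Printing Implicit Defensive.

(* Rows are indexed by 'I_N (row j of the paper is row j-1 here; only the
   order of rows matters).  A tableau is a function
   S : 'I_N -> nat -> nat, S j i being the entry of the box (j,i); only the
   values at boxes of the shape are relevant. *)

Definition is_box N (alpha beta : 'I_N -> nat) (j : 'I_N) (i : nat) : bool :=
  (alpha j < i <= beta j)%N.

Definition row_strict N (alpha beta : 'I_N -> nat) (S : 'I_N -> nat -> nat) : Prop :=
  forall (j : 'I_N) (i : nat), is_box alpha beta j i -> is_box alpha beta j i.+1 ->
    (S j i < S j i.+1)%N.

(* The w0-triple (u,v,w) with v = box (r,i), u = (j,i), w = (j,i+1), r < j,
   where u, w are boxes of or adjacent to row j, i.e. alpha j <= i <= beta j.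
   It is increasing if S(u) < S(v) < S(w), with S(u) = -oo when u is adjacent
   to the left end (i = alpha j) and S(w) = +oo when w is adjacent to the right
   end (i + 1 = beta j + 1). *)
Definition incr_w0_triple N (alpha beta : 'I_N -> nat) (S : 'I_N -> nat -> nat)
    (r j : 'I_N) (i : nat) : bool :=
  [&& (r < j)%N, is_box alpha beta r i, (alpha j <= i <= beta j)%N,
      (i == alpha j) || (S j i < S r i)%N &
      (i == beta j) || (S r i < S j i.+1)%N].

Definition h_w0 N (alpha beta : 'I_N -> nat) (S : 'I_N -> nat -> nat) : nat :=
  \sum_(r < N) \sum_(j < N) \sum_(0 <= i < (beta r).+1)
     incr_w0_triple alpha beta S r j i.

Definition add_eps N (alpha : 'I_N -> nat) (I : {set 'I_N}) : 'I_N -> nat :=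
  fun j => (alpha j + (j \in I))%N.

Definition h_I N (I : {set 'I_N}) (alpha : 'I_N -> nat) : nat :=
  #|[set rs : 'I_N * 'I_N | [&& (rs.1 < rs.2)%N, rs.1 \in I, rs.2 \notin I &
                               alpha rs.2 == (alpha rs.1).+1]]|.

Definition zero_rows N (alpha beta : 'I_N -> nat) (S : 'I_N -> nat -> nat) : {set 'I_N} :=
  [set j : 'I_N | [exists i : 'I_((beta j).+1), is_box alpha beta j i && (S j i == 0%N)]].

(* Main.v *)
Require Import Defs.
From mathcomp Require Import all_boot all_order all_algebra.
From mathcomp Require Import zify.
Import GRing.Theory Num.Theory.

Lemma key (rj zr zj : bool) ar br aj bj i sri sji sji1 :
  ar <= br -> aj <= bj -> (zr -> ar < br) -> (zr -> i = ar.+1 -> sri = 0) ->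
  (~~ zr -> ar < i <= br -> 0 < sri) -> (ar.+1 < i <= br -> 0 < sri) ->
  (zj -> aj < bj) -> (zj -> i = aj -> sji1 = 0) -> (zj -> i = aj.+1 -> sji = 0) ->
  (~~ zj -> aj <= i < bj -> 0 < sji1) -> (~~ zj -> aj < i <= bj -> 0 < sji) ->
  (aj.+1 < i <= bj -> 0 < sji) -> (aj < i < bj -> 0 < sji1) ->
  ([&& rj, ar < i <= br, aj <= i <= bj, (i == aj) || (sji < sri) &
      (i == bj) || (sri < sji1)] : nat) =
  [&& rj, ar + zr < i <= br, aj + zj <= i <= bj, (i == aj + zj) || (sji < sri) &
      (i == bj) || (sri < sji1)] + ((i == ar.+1) && [&& rj, zr, ~~ zj & aj == ar.+1]).
Proof.
move=> abr abj Hzr Hzr0 Hnzr Hpr Hzj Hzj1 Hzj2 Hnzj Hnzj' Hpj Hpj'.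
case: rj; last by rewrite /= andbF.
have E1 : forall a, i != a.+1 -> (a.+1 < i) = (a < i).
  by move=> a ne; rewrite ltn_neqAle eq_sym ne.
have E2 : forall a, i != a -> (a.+1 <= i) = (a <= i).
  by move=> a ne; rewrite [a <= i]leq_eqVlt eq_sym (negbTE ne).
case: zr Hzr Hzr0 Hnzr => Hzr Hzr0 Hnzr; case: zj Hzj Hzj1 Hzj2 Hnzj Hnzj' => Hzj Hzj1 Hzj2 Hnzj Hnzj';
  rewrite ?addn0 ?addn1 /= ?andbF ?addn0 //.
- lia.
- case: (eqVneq i ar.+1) => [Ei|ne].
    rewrite (Hzr0 erefl Ei) Ei ltnn /= ltn0 orbF leqnn (Hzr erefl) /=.
    lia.
  rewrite (E1 _ ne) ?(negbTE ne) /= ?addn0 //.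
- case: (eqVneq i aj) => [Ei|ne].
    rewrite (Hzj1 erefl Ei) Ei ?ltnn /= ?ltn0 ?orbF ?eqxx /=.
    lia.
  case: (eqVneq i aj.+1) => [Ei|ne2].
    rewrite (Hzj2 erefl Ei) Ei /=.
    lia.
  rewrite (E2 _ ne) ?(negbTE ne) ?(negbTE ne2) //.
Qed.

Lemma mono N (alpha beta : 'I_N -> nat) (S : 'I_N -> nat -> nat) j m k :
  row_strict alpha beta S -> (alpha j < m)%N -> (m + k <= beta j)%N ->
  (S j m + k <= S j (m + k))%N.
Proof.
move=> rs am; elim: k => [|k IH] hk; first by rewrite !addn0.
have h1 : (S j m + k <= S j (m + k))%N by apply: IH; lia.
have : (S j (m + k) < S j (m + k).+1)%N.
  apply: rs; rewrite /is_box; apply/andP; split; lia.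
rewrite !addnS; lia.
Qed.

Lemma sum_eq1 n k (c : bool) :
  (\sum_(0 <= i < n) ((i == k) && c : nat) = (c && (k < n)))%N.
Proof.
elim: n => [|n IH]; first by rewrite big_nil; case: c.
rewrite big_nat_recr //= IH; move: IH; case: c => /= IH; last by rewrite ?addn0 ?andbF.
lia.
Qed.

Theorem lemma5p3p3 (N : nat) (alpha beta : 'I_N -> nat) (S : 'I_N -> nat -> nat) :
  (forall j, (alpha j <= beta j)%N) ->
  row_strict alpha beta S ->
  let I := zero_rows alpha beta S in
  let T := S in
  ((h_w0 (add_eps alpha I) beta T)%:Z =
     (h_w0 alpha beta S)%:Z - (h_I I alpha)%:Z)%R.
Proof.
move=> hab rs I T.
have memI : forall k, (k \in I) = (alpha k < beta k)%N && (S k (alpha k).+1 == 0%N).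
  move=> k; rewrite /I /zero_rows inE; apply/existsP/andP.
    case=> [[i hi]] /= /andP[/andP[h1 h2] /eqP h0].
    have [ei|ne] := eqVneq i (alpha k).+1.
      by subst i; split; [ | rewrite h0].
    have := @mono _ alpha beta S k (alpha k).+1 (i - (alpha k).+1)%N rs (ltnSn (alpha k)).
    have -> : ((alpha k).+1 + (i - (alpha k).+1))%N = i by lia.
    move=> /(_ h2); rewrite h0; lia.
  case=> h1 h2.
  have hlt : ((alpha k).+1 < (beta k).+1)%N by [].
  by exists (Ordinal hlt); rewrite /is_box /= ltnSn h1.
have posp : forall k i, ((alpha k).+1 < i <= beta k)%N -> (0 < S k i)%N.
  move=> k i /andP[h1 h2].
  have := @mono _ alpha beta S k (alpha k).+1 (i - (alpha k).+1)%N rs (ltnSn (alpha k)).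
  have -> : ((alpha k).+1 + (i - (alpha k).+1))%N = i by lia.
  move=> /(_ h2); lia.
have posn : forall k i, k \notin I -> (alpha k < i <= beta k)%N -> (0 < S k i)%N.
  move=> k i; rewrite memI negb_and => hn /andP[h1 h2].
  have [ei|ne] := eqVneq i (alpha k).+1.
    subst i; move: hn; rewrite h2 /=; lia.
  apply: posp; apply/andP; split => //; lia.
suff -> : h_w0 alpha beta S = (h_w0 (add_eps alpha I) beta T + h_I I alpha)%N.
  by rewrite PoszD addrK.
have hI : h_I I alpha = (\sum_(r < N) \sum_(j < N)
    ([&& (r < j)%N, r \in I, j \notin I & alpha j == (alpha r).+1] : nat))%N.
  rewrite pair_big /h_I -sum1_card big_mkcond /=; apply: eq_bigr => [[r j]] _ /=.
  by rewrite inE /=; case: (_ && _).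
rewrite hI /h_w0 -big_split /=; apply: eq_bigr => r _.
rewrite -big_split /=; apply: eq_bigr => j _.
set c := [&& _, _, _ & _].
have -> : (c : nat) = (\sum_(0 <= i < (beta r).+1) ((i == (alpha r).+1) && c))%N.
  rewrite sum_eq1; case hc: c => //=.
  by move: hc; rewrite /c memI => /and4P[_ /andP[h _] _ _]; rewrite ltnS h.
rewrite -big_split /=; apply: eq_big_nat => i hi.
rewrite /incr_w0_triple /is_box /add_eps /T /c.
apply: (key (r < j)%N (r \in I) (j \in I) (alpha r) (beta r) (alpha j) (beta j) i
   (S r i) (S j i) (S j i.+1)).
- exact: hab.
- exact: hab.
- by rewrite memI => /andP[].
- by rewrite memI => /andP[_ /eqP] h ->.
- exact: posn.
- exact: posp.
- by rewrite memI => /andP[].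
- by move=> + ->; rewrite memI => /andP[_ /eqP].
- by move=> + ->; rewrite memI => /andP[_ /eqP].
- move=> hn h; apply: posn => //; lia.
- exact: posn.
- exact: posp.
- move=> h; apply: posp; lia.
Qed.
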